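(* Let $F:\mathbb{R}^p\to\mathbb{R}^p$ be single-valued and $T:\mathbb{R}^p\rightrightarrows\mathbb{R}^p$, $\Phi:=F+T$, with $\mathrm{zer}\,\Phi\neq\emptyset$. Assume $T$ is maximally monotone, $F$ is $L$-Lipschitz continuous, and $\langle Fx-Fx^\star,x-x^\star\rangle\ge0$ for all $x\in\mathrm{dom}\,F$ for some $x^\star\in\mathrm{zer}\,\Phi$. Let $\eta>0$ and let $\{(x^k,y^k)\}$ be generated by the reflected forward-backward splitting scheme: start from $x^0\in\mathrm{dom}\,\Phi$, set $x^{-1}:=x^0$, and for $k\ge0$ $$y^k:=2x^k-x^{k-1},\qquad x^{k+1}:=J_{\eta T}(x^k-\eta Fy^k).$$ Define $$\mathcal{V}_k:=\|x^k-x^\star\|^2+2\|x^k-x^{k-1}\|^2+(1-\sqrt2L\eta)\|x^k-y^{k-1}\|^2+2\eta\langle Fy^{k-1}-Fx^\star,x^k-x^{k-1}\rangle.$$ Then for every $k\ge1$, $$\mathcal{V}_k\ge\mathcal{V}_{k+1}+\big[1-(1+\sqrt2)L\eta\big]\big[\|y^k-x^k\|^2+\|x^k-y^{k-1}\|^2\big],$$ $$\mathcal{V}_k\ge(1-L\eta)\|x^k-x^\star\|^2+\big(1-(1+\sqrt2)L\eta\big)\|x^k-y^{k-1}\|^2+2(1-L\eta)\|x^k-x^{k-1}\|^2.$$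
   Context: $J_{\eta T}:=(\mathbb{I}+\eta T)^{-1}$ is the resolvent of $\eta T$. $\mathrm{zer}\,\Phi:=\{x:0\in Fx+Tx\}$. $F$ is $L$-Lipschitz if $\|Fx-Fy\|\le L\|x-y\|$. The range $k\ge1$ is where all quantities in $\mathcal{V}_k$ are defined by the scheme. *)

(* Defs.v *)
From HB Require Import structures.
From mathcomp Require Import all_boot all_order all_algebra.
From mathcomp Require Import reals.
Set Implicit Arguments. Unset Strict Implicit. Unset Printing Implicit Defensive.
Import Order.TTheory GRing.Theory Num.Theory.
Local Open Scope ring_scope.

(* R^p is modelled as row vectors 'rV[R]_p with the Euclidean inner product. *)
Definition dotv (R : realType) (p : nat) (u v : 'rV[R]_p) : R :=
  \sum_(i < p) u ord0 i * v ord0 i.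
Definition normv (R : realType) (p : nat) (u : 'rV[R]_p) : R :=
  Num.sqrt (dotv u u).

(* Set-valued operators T : R^p ==> R^p as graphs: T x u  means  u \in T x. *)
Definition setop (R : realType) (p : nat) := 'rV[R]_p -> 'rV[R]_p -> Prop.

Definition monotone_op (R : realType) (p : nat) (T : setop R p) : Prop :=
  forall x u y v, T x u -> T y v -> 0 <= dotv (u - v) (x - y).

Definition maximally_monotone (R : realType) (p : nat) (T : setop R p) : Prop :=
  monotone_op T /\
  forall S : setop R p, monotone_op S -> (forall x u, T x u -> S x u) ->
    forall x u, S x u -> T x u.

Definition lipschitz (R : realType) (p : nat) (F : 'rV[R]_p -> 'rV[R]_p) (L : R) :=
  forall x y, normv (F x - F y) <= L * normv (x - y).

Definition zer (R : realType) (p : nat) (F : 'rV[R]_p -> 'rV[R]_p) (T : setop R p)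
  (x : 'rV[R]_p) : Prop := T x (- F x).

(* dom (F + T) = dom T, since F is single-valued and everywhere defined *)
Definition dom (R : realType) (p : nat) (T : setop R p) (x : 'rV[R]_p) : Prop :=
  exists u, T x u.

(* x = J_{eta T} z, i.e. z \in x + eta T x, i.e. eta^-1 (z - x) \in T x *)
Definition is_resolvent (R : realType) (p : nat) (eta : R) (T : setop R p)
  (z x : 'rV[R]_p) : Prop := T x (eta^-1 *: (z - x)).

(* x^{k-1}, with the convention x^{-1} := x^0 *)
Definition xprev (R : realType) (p : nat) (x : nat -> 'rV[R]_p) (k : nat) : 'rV[R]_p :=
  if k is k'.+1 then x k' else x 0%N.

Definition yseq (R : realType) (p : nat) (x : nat -> 'rV[R]_p) (k : nat) : 'rV[R]_p :=
  2%:R *: x k - xprev x k.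

(* V_k (meaningful for k >= 1) *)
Definition Vk (R : realType) (p : nat) (F : 'rV[R]_p -> 'rV[R]_p) (L eta : R)
  (x : nat -> 'rV[R]_p) (xs : 'rV[R]_p) (k : nat) : R :=
  normv (x k - xs) ^+ 2 + 2%:R * normv (x k - x k.-1) ^+ 2
  + (1 - Num.sqrt 2%:R * L * eta) * normv (x k - yseq x k.-1) ^+ 2
  + 2%:R * eta * dotv (F (yseq x k.-1) - F xs) (x k - x k.-1).

(* Main.v *)
Require Import Defs.
From HB Require Import structures.
From mathcomp Require Import all_boot all_order all_algebra.
From mathcomp Require Import reals.
From mathcomp Require Import ring lra.
Set Implicit Arguments.
Import Order.TTheory GRing.Theory Num.Theory.
Local Open Scope ring_scope.
Section S.
Variable R : realType.
Lemma key1 (η L r nG N nd dd aa bb gd : R) : 0 < η -> 0 <= L -> 0 <= nG -> 0 <= N -> 0 <= nd -> 0 < r -> r^+2 = 2 ->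
  - gd <= nG * nd -> nG <= L * N -> nd ^+ 2 = dd -> N ^+ 2 <= (2 + r) * aa + r * bb ->
  - (2 * η * gd) <= η * L * (r * dd + (1 + r) * aa + bb).
Proof.
move=> he hL hG hN hd hr hr2 h1 h2 h3 h4.
have h5 : nG * nd <= L * N * nd by rewrite ler_wpM2r.
have h6 : 2 * N * nd <= r * nd^+2 + r / 2 * N ^+ 2.
  have h7 : 0 <= (r * nd - N) ^+ 2 by apply: sqr_ge0.
  have h8 : 2 * r * nd * N <= 2 * nd ^+ 2 + N ^+ 2.
    have e : (r * nd - N) ^+ 2 = r^+2 * nd ^+ 2 - 2 * r * nd * N + N ^+ 2 by ring.
    rewrite e hr2 in h7; lra.
  nra.
have h9 : r / 2 * N ^+ 2 <= (1 + r) * aa + bb.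
  have : r / 2 * N ^+ 2 <= r / 2 * ((2 + r) * aa + r * bb) by rewrite ler_wpM2l // divr_ge0 // ltW.
  move=> h.
  have e : r / 2 * ((2 + r) * aa + r * bb) = r * aa + r^+2 / 2 * aa + r^+2 / 2 * bb by field.
  rewrite e hr2 in h; lra.
have hLN : 0 <= L * N * nd by rewrite !mulr_ge0.
have : 2 * N * nd <= r * dd + (1 + r) * aa + bb by rewrite -h3; lra.
move=> h10.
have : L * (2 * N * nd) <= L * (r * dd + (1 + r) * aa + bb) by rewrite ler_wpM2l.
move=> h11.
have : η * (L * (2 * N * nd)) <= η * (L * (r * dd + (1 + r) * aa + bb)) by rewrite ler_wpM2l // ltW.
move=> h12.
have : η * (- gd) <= η * (L * N * nd) by rewrite ler_wpM2l ?(ltW he) //; lra.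
nra.
Qed.

Variable p : nat.
Implicit Types u v w : 'rV[R]_p.
Lemma dotvDl u v w : dotv (u + v) w = dotv u w + dotv v w.
Proof. by rewrite /dotv -big_split; apply: eq_bigr => i _; rewrite !mxE mulrDl. Qed.
Lemma dotvC u v : dotv u v = dotv v u.
Proof. by apply: eq_bigr => i _; rewrite mulrC. Qed.
Lemma dotvDr u v w : dotv w (u + v) = dotv w u + dotv w v.
Proof. by rewrite dotvC dotvDl !(dotvC w). Qed.
Lemma dotvZl a u w : dotv (a *: u) w = a * dotv u w.
Proof. by rewrite /dotv mulr_sumr; apply: eq_bigr => i _; rewrite !mxE mulrA. Qed.
Lemma dotvZr a u w : dotv w (a *: u) = a * dotv w u.
Proof. by rewrite dotvC dotvZl dotvC. Qed.
Lemma dotvNl u w : dotv (- u) w = - dotv u w.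
Proof. by rewrite -scaleN1r dotvZl mulN1r. Qed.
Lemma dotvNr u w : dotv w (- u) = - dotv w u.
Proof. by rewrite dotvC dotvNl dotvC. Qed.
Lemma dotv_ge0 u : 0 <= dotv u u.
Proof. by apply: sumr_ge0 => i _; rewrite -expr2 sqr_ge0. Qed.
Lemma normv_ge0 u : 0 <= normv u.
Proof. exact: sqrtr_ge0. Qed.
Lemma normv_sq u : normv u ^+ 2 = dotv u u.
Proof. by rewrite sqr_sqrtr // dotv_ge0. Qed.
Lemma dotv_eq0 u : dotv u u = 0 -> u = 0.
Proof.
move=> /eqP; rewrite /dotv psumr_eq0 => [/allP H|i _]; last by rewrite -expr2 sqr_ge0.
apply/rowP => j; rewrite !mxE.
by have /(_ (mem_index_enum j)) := H j; rewrite mulf_eq0 orbb => /eqP.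
Qed.
Lemma dotv0l w : dotv 0 w = 0.
Proof. by rewrite -(scale0r 0) dotvZl mul0r. Qed.
Lemma dotv0r w : dotv w 0 = 0.
Proof. by rewrite dotvC dotv0l. Qed.
Lemma CS u v : `|dotv u v| <= normv u * normv v.
Proof.
have na0 := normv_ge0 u; have nb0 := normv_ge0 v.
have h1 := dotv_ge0 (normv v *: u - normv u *: v).
have h2 := dotv_ge0 (normv v *: u + normv u *: v).
rewrite !(dotvDl, dotvDr, dotvNl, dotvNr, dotvZl, dotvZr) in h1 h2.
rewrite -!normv_sq (dotvC v u) in h1 h2.
have [u0|nu] := eqVneq (normv u) 0.
  have -> : u = 0 by apply: dotv_eq0; by rewrite -normv_sq u0 expr0n.
  by rewrite dotv0l normr0 mulr_ge0 // normv_ge0.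
have [v0|nv] := eqVneq (normv v) 0.
  have -> : v = 0 by apply: dotv_eq0; by rewrite -normv_sq v0 expr0n.
  by rewrite dotv0r normr0 mulr_ge0 // normv_ge0.
have hp : 0 < normv u * normv v by rewrite mulr_gt0 // lt0r ?nu ?nv.
rewrite ler_norml; apply/andP; split; nra.
Qed.

Lemma key2 (η L nA nc nd dd ff ee gd : R) : 0 < η -> 0 <= L -> 0 <= nA -> 0 <= nc -> 0 <= nd ->
  - gd <= nA * nd -> nA <= L * nc -> nd ^+ 2 = dd -> nc ^+ 2 <= 2 * ff + 2 * ee ->
  - (2 * η * gd) <= η * L * (ff + ee + 2 * dd).
Proof.
move=> he hL hA hc hd h1 h2 h3 h4.
have h5 : nA * nd <= L * nc * nd by rewrite ler_wpM2r.
have h6 : 2 * nc * nd <= nc ^+ 2 / 2 + 2 * nd ^+ 2.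
  have h7 : 0 <= (nc - 2 * nd) ^+ 2 by apply: sqr_ge0.
  have e : (nc - 2 * nd) ^+ 2 = nc ^+ 2 - 4 * nc * nd + 4 * nd ^+ 2 by ring.
  rewrite e in h7; lra.
have h10 : 2 * nc * nd <= ff + ee + 2 * dd by rewrite -h3; lra.
have h11 : L * (2 * nc * nd) <= L * (ff + ee + 2 * dd) by rewrite ler_wpM2l.
have h12 : η * (L * (2 * nc * nd)) <= η * (L * (ff + ee + 2 * dd)) by rewrite ler_wpM2l // ltW.
have : η * (- gd) <= η * (L * nc * nd) by rewrite ler_wpM2l ?(ltW he) //; lra.
nra.
Qed.

Lemma par s t u v : 0 < s -> s * t = 1 ->
  dotv (u + v) (u + v) <= (1 + s) * dotv u u + (1 + t) * dotv v v.
Proof.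
move=> hs hst.
have h := dotv_ge0 (s *: u - v).
rewrite !(dotvDl, dotvDr, dotvNl, dotvNr, dotvZl, dotvZr) (dotvC v u) in h *.
have ht : 0 < t by move: hst; nra.
have h2 := mulr_ge0 (ltW ht) h.
have e : t * (s * (s * dotv u u) - s * dotv u v - (s * dotv u v - dotv v v))
   = (s * t) * (s * dotv u u) - 2 * (s * t) * dotv u v + t * dotv v v by ring.
rewrite e hst in h2; lra.
Qed.

Lemma monoA (eta : R) a c w : 0 < eta -> 0 <= dotv (eta^-1 *: a - c) w -> 0 <= dotv (a - eta *: c) w.
Proof.
move=> he; have -> : eta^-1 *: a - c = eta^-1 *: (a - eta *: c).
  by rewrite scalerBr scalerA mulVf ?scale1r // gt_eqF.
by rewrite dotvZl pmulr_rge0 // invr_gt0.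
Qed.

Lemma monoB (eta : R) a b w : 0 < eta -> 0 <= dotv (eta^-1 *: a - eta^-1 *: b) w -> 0 <= dotv (a - b) w.
Proof.
by move=> he; rewrite -scalerBr dotvZl pmulr_rge0 // invr_gt0.
Qed.
End S.
Arguments monoA {R p eta a c w}. Arguments monoB {R p eta a b w}. Arguments par {R p s t} u v.
Arguments CS {R p}. Arguments normv_sq {R p}. Arguments normv_ge0 {R p}. Arguments dotv_ge0 {R p}.

Lemma main7 (R : realType) (p : nat) (F : 'rV[R]_p -> 'rV[R]_p) (T : setop R p)
  (L eta : R) (xs : 'rV[R]_p) (x : nat -> 'rV[R]_p) :
  0 <= L -> maximally_monotone T ->
  lipschitz F L ->
  zer F T xs ->
  (forall z, 0 <= dotv (F z - F xs) (z - xs)) ->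
  0 < eta ->
  dom T (x 0%N) ->
  (forall k, is_resolvent eta T (x k - eta *: F (yseq x k)) (x k.+1)) ->
  forall k, (1 <= k)%N ->
    Vk F L eta x xs k >= Vk F L eta x xs k.+1
      + (1 - (1 + Num.sqrt 2%:R) * L * eta)
        * (normv (yseq x k - x k) ^+ 2 + normv (x k - yseq x k.-1) ^+ 2)
    /\
    Vk F L eta x xs k >= (1 - L * eta) * normv (x k - xs) ^+ 2
      + (1 - (1 + Num.sqrt 2%:R) * L * eta) * normv (x k - yseq x k.-1) ^+ 2
      + 2%:R * (1 - L * eta) * normv (x k - x k.-1) ^+ 2.
Proof.
move=> HL [mono _] Hlip Hz Hstar Heta _ Hres k Hk.
case: k Hk => // k _.
rewrite /Vk /=.
have hr2 : Num.sqrt (2%:R : R) ^+ 2 = 2 by rewrite sqr_sqrtr.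
have hr : 0 < Num.sqrt (2%:R : R) by rewrite sqrtr_gt0.
set r := Num.sqrt 2%:R in hr2 hr *.
set Y := yseq x k.
have Hr1 := Hres k.+1; have Hr0 := Hres k.
rewrite /is_resolvent -/Y in Hr0 Hr1.
rewrite /yseq /xprev -/(yseq x k) -/Y in Hr1 *.
set X0 := x k; set X1 := x k.+1; set X2 := x k.+2.
set Fk := F (2%:R *: X1 - X0); set Fk1 := F Y; set Fs := F xs.
rewrite /zer -/Fs in Hz.
have Hst (u v : 'rV[R]_p) : u = v -> normv u ^+ 2 = dotv v v by move=> ->; rewrite normv_sq.
split.
  have HA := monoA Heta (mono _ _ _ _ Hr1 Hz).
  have HB := monoB Heta (mono _ _ _ _ Hr1 Hr0).
  have HC := mulr_ge0 (ltW Heta) (Hstar (2%:R *: X1 - X0)).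
  rewrite -/Fk in HC.
  have K := @key1 _ eta L r (normv (Fk - Fk1)) (normv (2%:R *: X1 - X0 - Y)) (normv (X2 - (2%:R *: X1 - X0)))
    (dotv (X2 - (2%:R *: X1 - X0)) (X2 - (2%:R *: X1 - X0))) (dotv (X1 - X0) (X1 - X0)) (dotv (X1 - Y) (X1 - Y))
    (dotv (Fk - Fk1) (X2 - (2%:R *: X1 - X0))) Heta HL (normv_ge0 _) (normv_ge0 _) (normv_ge0 _) hr hr2.
  have := K _ (Hlip _ _) (normv_sq _); clear K => K.
  have h1 : - dotv (Fk - Fk1) (X2 - (2%:R *: X1 - X0)) <= normv (Fk - Fk1) * normv (X2 - (2%:R *: X1 - X0)).
    by have := CS (Fk - Fk1) (X2 - (2%:R *: X1 - X0)); rewrite ler_norml => /andP[h _]; lra.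
  have h2 : normv (2%:R *: X1 - X0 - Y) ^+ 2 <= (2 + r) * dotv (X1 - X0) (X1 - X0) + r * dotv (X1 - Y) (X1 - Y).
    have hs : 0 < 1 + r by lra.
    have hst : (1 + r) * (r - 1) = 1 by rewrite mulrBr mulr1 mulrDl mul1r -expr2 hr2; lra.
    have := par (X1 - X0) (X1 - Y) hs hst.
    rewrite (Hst _ ((X1 - X0) + (X1 - Y))); last by apply/rowP => i; rewrite !mxE; ring.
    lra.
  have {h1 h2} K2 := K h1 h2; move: K2 => {K} K.
  rewrite -/X0 -/X1 -/X2 -/Fk in HA HB; rewrite -/Fs in HC.
  rewrite !normv_sq.
  move: HA HB HC K.
  rewrite !(dotvDl, dotvDr, dotvNl, dotvNr, dotvZl, dotvZr).
  try rewrite [dotv X1 X0]dotvC.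
  try rewrite [dotv X2 X0]dotvC.
  try rewrite [dotv xs X0]dotvC.
  try rewrite [dotv Y X0]dotvC.
  try rewrite [dotv Fk X0]dotvC.
  try rewrite [dotv Fk1 X0]dotvC.
  try rewrite [dotv Fs X0]dotvC.
  try rewrite [dotv X2 X1]dotvC.
  try rewrite [dotv xs X1]dotvC.
  try rewrite [dotv Y X1]dotvC.
  try rewrite [dotv Fk X1]dotvC.
  try rewrite [dotv Fk1 X1]dotvC.
  try rewrite [dotv Fs X1]dotvC.
  try rewrite [dotv xs X2]dotvC.
  try rewrite [dotv Y X2]dotvC.
  try rewrite [dotv Fk X2]dotvC.
  try rewrite [dotv Fk1 X2]dotvC.
  try rewrite [dotv Fs X2]dotvC.
  try rewrite [dotv Y xs]dotvC.
  try rewrite [dotv Fk xs]dotvC.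
  try rewrite [dotv Fk1 xs]dotvC.
  try rewrite [dotv Fs xs]dotvC.
  try rewrite [dotv Fk Y]dotvC.
  try rewrite [dotv Fk1 Y]dotvC.
  try rewrite [dotv Fs Y]dotvC.
  try rewrite [dotv Fk1 Fk]dotvC.
  try rewrite [dotv Fs Fk]dotvC.
  try rewrite [dotv Fs Fk1]dotvC.
  move=> HA HB HC K.
  lra.
have h1 : - dotv (Fk1 - Fs) (X1 - X0) <= normv (Fk1 - Fs) * normv (X1 - X0).
  by have := CS (Fk1 - Fs) (X1 - X0); rewrite ler_norml => /andP[h _]; lra.
have h2 : normv (Y - xs) ^+ 2 <= 2 * dotv (X1 - xs) (X1 - xs) + 2 * dotv (X1 - Y) (X1 - Y).
  have hs : (0:R) < 1 by [].
  have hst : (1:R) * 1 = 1 by rewrite mulr1.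
  have := par (X1 - xs) (- (X1 - Y)) hs hst.
  rewrite (Hst _ ((X1 - xs) + - (X1 - Y))); last by apply/rowP => i; rewrite !mxE; ring.
  rewrite dotvNl dotvNr opprK; lra.
have K := @key2 _ eta L (normv (Fk1 - Fs)) (normv (Y - xs)) (normv (X1 - X0))
    (dotv (X1 - X0) (X1 - X0)) (dotv (X1 - xs) (X1 - xs)) (dotv (X1 - Y) (X1 - Y))
    (dotv (Fk1 - Fs) (X1 - X0)) Heta HL (normv_ge0 _) (normv_ge0 _) (normv_ge0 _) h1 (Hlip _ _) (normv_sq _) h2.
rewrite !normv_sq; lra.
Qed.

Theorem lemma7 (R : realType) (p : nat) (F : 'rV[R]_p -> 'rV[R]_p) (T : setop R p)
  (L eta : R) (xs : 'rV[R]_p) (x : nat -> 'rV[R]_p) :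
  maximally_monotone T ->
  lipschitz F L ->
  zer F T xs ->
  (forall z, 0 <= dotv (F z - F xs) (z - xs)) ->
  0 < eta ->
  dom T (x 0%N) ->
  (forall k, is_resolvent eta T (x k - eta *: F (yseq x k)) (x k.+1)) ->
  forall k, (1 <= k)%N ->
    Vk F L eta x xs k >= Vk F L eta x xs k.+1
      + (1 - (1 + Num.sqrt 2%:R) * L * eta)
        * (normv (yseq x k - x k) ^+ 2 + normv (x k - yseq x k.-1) ^+ 2)
    /\
    Vk F L eta x xs k >= (1 - L * eta) * normv (x k - xs) ^+ 2
      + (1 - (1 + Num.sqrt 2%:R) * L * eta) * normv (x k - yseq x k.-1) ^+ 2
      + 2%:R * (1 - L * eta) * normv (x k - x k.-1) ^+ 2.
Proof.
move=> Hmm Hlip Hz Hstar Heta Hd Hres k Hk.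
case: p F T xs x Hmm Hlip Hz Hstar Hd Hres => [|p'] F T xs x Hmm Hlip Hz Hstar Hd Hres.
  rewrite /Vk /normv /dotv !big_ord0 sqrtr0; split; lra.
have HL : 0 <= L.
  have h := Hlip (const_mx 1) 0.
  have hp : 0 < normv (const_mx 1 - 0 : 'rV[R]_p'.+1).
  rewrite /normv sqrtr_gt0 /dotv subr0.
  under eq_bigr do rewrite mxE mul1r.
  by rewrite sumr_const card_ord ltr0n.
  have := normv_ge0 (F (const_mx 1) - F 0); nra.
exact: (@main7 _ _ F T L eta xs x HL Hmm Hlip Hz Hstar Heta Hd Hres k Hk).
Qed.
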